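(* Let $R$ be a commutative unital ring, $G$ a group, $(\mathcal B_1,\Phi_1)\subseteq(\mathcal B_2,\Phi_2)$ a partial subaction of $G$ on generalized Boolean algebras with $\Phi_2=(\{\mathcal I_{2,t}\},\{\phi_{2,t}\})$, and $A_2=\mathrm{Lc}(R,\mathcal B_2)\rtimes_{\Phi_2}G$. Suppose $\mathcal B_1$ is an ideal of $\mathcal B_2$ and that for every $U\in\mathcal B_2$ there exist $g_1,\dots,g_n\in G$ and $V_i\in\mathcal I_{2,g_i^{-1}}\cap\mathcal B_1$ with $U\le\bigcup_{i=1}^n\phi_{2,g_i}(V_i)$. Then for every $U\in\mathcal B_2$ there exist an index set $I$, elements $U_i\in\mathcal B_1$ ($i\in I$) and a surjective left $A_2$-module homomorphism $\bigoplus_{i\in I}A_2(U_i\delta_e)\to A_2(U\delta_e)$.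
   Context: A generalized Boolean algebra is a distributive relatively complemented lattice with least element $0$; an ideal is a subset closed under finite joins and under meets with arbitrary elements. A partial action $\Phi$ of $G$ on $\mathcal B$: ideals $\mathcal I_t$ and isomorphisms $\phi_t:\mathcal I_{t^{-1}}\to\mathcal I_t$ with $\mathcal I_e=\mathcal B$, $\phi_e=\mathrm{id}$, $\phi_s(\mathcal I_{s^{-1}}\cap\mathcal I_t)=\mathcal I_s\cap\mathcal I_{st}$, $\phi_s\phi_t=\phi_{st}$ where defined. A partial subaction: $\mathcal B_1\subseteq\mathcal B_2$ sub generalized Boolean algebra, $\mathcal I_{1,t}\subseteq\mathcal I_{2,t}$, $\phi_{2,t}$ restricting to $\phi_{1,t}$. $\mathrm{Lc}(R,\mathcal B)$ is the algebra of locally constant compactly supported $R$-valued functions on the Stone space of $\mathcal B$, spanned by idempotents $1_U$; $\mathrm{Lc}(R,\mathcal B)\rtimes_\Phi G=\bigoplus_g\mathrm{Lc}(R,\mathcal I_g)\delta_g$ with $U\delta_g:=1_U\delta_g$ and $(U\delta_g)(V\delta_h)=\phi_g(\phi_{g^{-1}}(U)\cap V)\delta_{gh}$. *)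

(* Defs.v *)
From HB Require Import structures.
From mathcomp Require Import all_boot all_order all_algebra.
From Stdlib Require Import ClassicalEpsilon.
Set Implicit Arguments. Unset Strict Implicit. Unset Printing Implicit Defensive.
Import Order.Theory GRing.Theory.
Local Open Scope order_scope.

Record group_laws (G : Type) (mul : G -> G -> G) (inv : G -> G) (one : G) : Prop := {
  gmulA : forall x y z, mul x (mul y z) = mul (mul x y) z;
  gmul1 : forall x, mul one x = x;
  gmulV : forall x, mul (inv x) x = one }.

Section GBA.
Context {d : Order.disp_t} {B : cbDistrLatticeType d}.
(* A generalized Boolean algebra = distributive relatively (sectionally)
   complemented lattice with least element: a cbDistrLatticeType. *)

Definition is_sub_gba (S : B -> Prop) : Prop :=
  [/\ S \bot,
      forall x y, S x -> S y -> S (x `|` y),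
      forall x y, S x -> S y -> S (Order.meet x y) &
      forall x y, S x -> S y -> S (x `\` y)].

Definition is_ideal (S J : B -> Prop) : Prop :=
  [/\ forall x, J x -> S x,
      J \bot,
      forall x y, J x -> J y -> J (x `|` y) &
      forall x y, J x -> S y -> J (Order.meet x y)].

(* The maps are
   represented by total functions B -> B, only their values on I (t^-1) matter. *)
Definition is_partial_action (G : Type) (mul : G -> G -> G) (inv : G -> G)
    (one : G) (S : B -> Prop) (I : G -> B -> Prop) (phi : G -> B -> B) : Prop :=
  [/\ (forall t, is_ideal S (I t)),
      ((forall x, I one x <-> S x) /\ (forall x, S x -> phi one x = x)),
      (forall t, [/\ (forall x, I (inv t) x -> I t (phi t x)),
                    (forall x y, I (inv t) x -> I (inv t) y -> phi t x = phi t y -> x = y),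
                    (forall y, I t y -> exists2 x, I (inv t) x & phi t x = y),
                    (forall x y, I (inv t) x -> I (inv t) y ->
                                phi t (x `|` y) = phi t x `|` phi t y) &
                    (forall x y, I (inv t) x -> I (inv t) y ->
                                phi t (Order.meet x y) = Order.meet (phi t x) (phi t y))]),
      (forall s t y, (I s y /\ I (mul s t) y) <->
                     (exists2 x, (I (inv s) x /\ I t x) & phi s x = y)) &
      (forall s t x, I (inv t) x -> I (inv s) (phi t x) ->
                     phi s (phi t x) = phi (mul s t) x)].

Definition is_partial_subaction (G : Type) (mul : G -> G -> G) (inv : G -> G)
    (one : G) (B1 : B -> Prop) (I1 : G -> B -> Prop) (phi1 : G -> B -> B)
    (I2 : G -> B -> Prop) (phi2 : G -> B -> B) : Prop :=
  [/\ is_sub_gba B1,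
      is_partial_action mul inv one B1 I1 phi1,
      is_partial_action mul inv one (fun _ => True) I2 phi2,
      (forall t x, I1 t x -> I2 t x) &
      (forall t x, I1 (inv t) x -> phi2 t x = phi1 t x)].

Definition is_char (x : B -> bool) : Prop :=
  [/\ x \bot = false,
      forall U V, x (U `|` V) = x U || x V,
      forall U V, x (Order.meet U V) = x U && x V &
      exists U, x U].

Definition stone := {x : B -> bool | is_char x}.

End GBA.

Arguments stone {d} B.

Section SkewRing.
Local Open Scope ring_scope.
Context {d : Order.disp_t} {B : cbDistrLatticeType d} (R : comPzRingType).
Context (G : Type) (mul : G -> G -> G) (inv : G -> G) (one : G).
Context (I : G -> B -> Prop) (phi : G -> B -> B).

(* elements of Lc(R,B) >< G are represented as functions G -> Lc(R,B),
   g |-> coefficient of delta_g, where Lc(R,B) is realised as functions on the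
   Stone space; a formal sum [:: (r, U, g); ...] denotes sum r (1_U delta_g). *)
Definition skel := G -> stone B -> R.

Definition fsum (l : seq (R * B * G)) : skel :=
  fun k x => \sum_(t <- l)
     (if excluded_middle_informative (t.2 = k)
      then t.1.1 * (sval x t.1.2)%:R else 0).

Definition valid (l : seq (R * B * G)) : Prop :=
  forall t, List.In t l -> I t.2 t.1.2.

Definition inA (a : skel) : Prop := exists2 l, valid l & fsum l = a.

(* product of formal sums: (U delta_g)(V delta_h) = phi_g(phi_{g^-1}(U) /\ V) delta_{gh} *)
Definition lmul (l m : seq (R * B * G)) : seq (R * B * G) :=
  [seq (t.1.1 * s.1.1, phi t.2 (Order.meet (phi (inv t.2) t.1.2) s.1.2), mul t.2 s.2)
  | t : R * B * G <- l, s : R * B * G <- m].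

Definition rep (a : skel) : seq (R * B * G) :=
  epsilon (inhabits [::]) (fun l => valid l /\ fsum l = a).

Definition amul (a b : skel) : skel := fsum (lmul (rep a) (rep b)).

Definition aadd (a b : skel) : skel := fun g x => a g x + b g x.
Definition azero : skel := fun _ _ => 0.

Definition delta (U : B) (g : G) : skel := fsum [:: (1, U, g)].

Definition lideal (U : B) : skel -> Prop :=
  fun y => exists2 a, inA a & y = amul a (delta U one).

Definition in_dsum (J : Type) (Us : J -> B) (m : J -> skel) : Prop :=
  (forall i, lideal (Us i) (m i)) /\
  exists s : seq J, forall i, ~ List.In i s -> m i = azero.

Definition surj_module_hom (J : Type) (Us : J -> B) (U : B)
    (h : (J -> skel) -> skel) : Prop :=
  [/\ forall m, in_dsum Us m -> lideal U (h m),
      forall m m', in_dsum Us m -> in_dsum Us m' ->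
         h (fun i => aadd (m i) (m' i)) = aadd (h m) (h m'),
      forall a m, inA a -> in_dsum Us m ->
         h (fun i => amul a (m i)) = amul a (h m) &
      forall y, lideal U y -> exists2 m, in_dsum Us m & h m = y].

End SkewRing.

(* Main.v *)
Require Import Defs.
From HB Require Import structures.
From mathcomp Require Import all_boot all_order all_algebra.
From Stdlib Require Import ClassicalEpsilon FunctionalExtensionality.
Set Implicit Arguments. Unset Strict Implicit. Unset Printing Implicit Defensive.
Import Order.Theory GRing.Theory.
Local Open Scope order_scope.

Section Grp.
Variables (G : Type) (mul : G -> G -> G) (inv : G -> G) (one : G).
Hypothesis GL : group_laws mul inv one.
Lemma g_mulA x y z : mul x (mul y z) = mul (mul x y) z. Proof. by case: GL. Qed.
Lemma g_mul1 x : mul one x = x. Proof. by case: GL. Qed.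
Lemma g_mulV x : mul (inv x) x = one. Proof. by case: GL. Qed.
Lemma g_mulKV x y : mul (inv x) (mul x y) = y.
Proof. by rewrite g_mulA g_mulV g_mul1. Qed.
Lemma g_mulxV x : mul x (inv x) = one.
Proof.
have -> : mul x (inv x) = mul (mul (inv (inv x)) (inv x)) (mul x (inv x)) by rewrite g_mulV g_mul1.
by rewrite -g_mulA (g_mulA (inv x) x) g_mulV g_mul1 g_mulV.
Qed.
Lemma g_mulx1 x : mul x one = x.
Proof. by rewrite -(g_mulV x) g_mulA g_mulxV g_mul1. Qed.
Lemma g_invK x : inv (inv x) = x.
Proof. by rewrite -(g_mulx1 (inv (inv x))) -(g_mulV x) g_mulA g_mulV g_mul1. Qed.
Lemma g_inv_uniq a b : mul a b = one -> b = inv a.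
Proof. by move=> h; rewrite -(g_mul1 b) -(g_mulV a) -g_mulA h g_mulx1. Qed.
Lemma g_invM g h : inv (mul g h) = mul (inv h) (inv g).
Proof.
symmetry; apply: g_inv_uniq.
by rewrite -g_mulA (g_mulA h) g_mulxV g_mul1 g_mulxV.
Qed.
Lemma g_inv1 : inv one = one.
Proof. by symmetry; apply: g_inv_uniq; rewrite g_mul1. Qed.
Lemma g_eqM g s k : (mul g s = k) <-> (s = mul (inv g) k).
Proof. by split=> [<-|->]; rewrite ?g_mulKV // g_mulA g_mulxV g_mul1. Qed.
End Grp.
Section PAct.
Variables (G : Type) (mul : G -> G -> G) (inv : G -> G) (one : G).
Variables (d : Order.disp_t) (B : cbDistrLatticeType d).
Variables (I : G -> B -> Prop) (phi : G -> B -> B).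
Hypothesis GL : group_laws mul inv one.
Hypothesis PA : is_partial_action mul inv one (fun _ : B => True) I phi.

Lemma PIt t : is_ideal (fun _ => True) (I t). Proof. by case: PA. Qed.
Lemma I_bot t : I t \bot. Proof. by case: (PIt t). Qed.
Lemma I_join t x y : I t x -> I t y -> I t (x `|` y). Proof. by case: (PIt t) => _ _ h _; apply: h. Qed.
Lemma I_meetr t x y : I t x -> I t (x `&` y). Proof. by case: (PIt t) => _ _ _ h ?; apply: h. Qed.
Lemma I_meetl t x y : I t y -> I t (x `&` y). Proof. by rewrite meetC; apply: I_meetr. Qed.
Lemma I_le t x y : y <= x -> I t x -> I t y.
Proof. by move=> le hx; rewrite -(meet_r le); apply: I_meetr. Qed.
Lemma I_one x : I one x. Proof. by case: PA => _ [h _] _ _ _; apply/h. Qed.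
Lemma phi1 x : phi one x = x. Proof. by case: PA => _ [_ h] _ _ _; apply: h. Qed.
Lemma phi_I t x : I (inv t) x -> I t (phi t x). Proof. by move=> *; case: PA => _ _ /(_ t) [h _ _ _ _] _ _; apply: h. Qed.
Lemma phi_surj t y : I t y -> exists2 x, I (inv t) x & phi t x = y.
Proof. by move=> *; case: PA => _ _ /(_ t) [_ _ h _ _] _ _; apply: h. Qed.
Lemma phiU t x y : I (inv t) x -> I (inv t) y -> phi t (x `|` y) = phi t x `|` phi t y.
Proof. by move=> *; case: PA => _ _ /(_ t) [_ _ _ h _] _ _; apply: h. Qed.
Lemma phiI t x y : I (inv t) x -> I (inv t) y -> phi t (x `&` y) = phi t x `&` phi t y.
Proof. by move=> *; case: PA => _ _ /(_ t) [_ _ _ _ h] _ _; apply: h. Qed.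
Lemma phi_comp s t x : I (inv t) x -> I (inv s) (phi t x) -> phi s (phi t x) = phi (mul s t) x.
Proof. by move=> *; case: PA => _ _ _ _ h; apply: h. Qed.
Lemma phi_P4 s t x : I (inv s) x -> I t x -> I s (phi s x) /\ I (mul s t) (phi s x).
Proof. by case: PA => _ _ _ h _ hx ht; apply/h; exists x. Qed.

Lemma phi_I' t x : I t x -> I (inv t) (phi (inv t) x).
Proof. by move=> h; apply: phi_I; rewrite (g_invK GL). Qed.
Lemma phiK t U : I t U -> phi t (phi (inv t) U) = U.
Proof.
move=> h; rewrite phi_comp ?(g_mulxV GL) ?phi1 //; first by rewrite (g_invK GL).
exact: phi_I'.
Qed.
Lemma phiK' t U : I (inv t) U -> phi (inv t) (phi t U) = U.
Proof.
move=> h; rewrite phi_comp ?(g_mulV GL) ?phi1 //.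
by rewrite (g_invK GL); apply: phi_I.
Qed.
Lemma phi0 t : phi t \bot = \bot.
Proof.
case: (phi_surj (I_bot t)) => x hx e.
transitivity (phi t (x `&` \bot)); first by rewrite meetx0.
by rewrite phiI ?e ?meet0x //; apply: I_bot.
Qed.
Lemma phi_le t x y : I (inv t) x -> I (inv t) y -> x <= y -> phi t x <= phi t y.
Proof. by move=> hx hy le; rewrite -(meet_l le) phiI // leIr. Qed.
Lemma phi_leI t x y : I (inv t) y -> x <= y -> phi t x <= phi t y.
Proof. by move=> hy le; apply: phi_le => //; apply: I_le hy. Qed.
End PAct.
Section PAct2.
Variables (G : Type) (mul : G -> G -> G) (inv : G -> G) (one : G).
Variables (d : Order.disp_t) (B : cbDistrLatticeType d).
Variables (I : G -> B -> Prop) (phi : G -> B -> B).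
Hypothesis GL : group_laws mul inv one.
Hypothesis PA : is_partial_action mul inv one (fun _ : B => True) I phi.

Definition pr g U V := phi g (Order.meet (phi (inv g) U) V).

Lemma pr_I g h U V : I g U -> I h V -> I (mul g h) (pr g U V).
Proof.
move=> hU hV.
have h1 : I (inv g) (phi (inv g) U `&` V) by apply: (I_meetr PA); exact: (phi_I' GL PA hU).
have h2 : I h (phi (inv g) U `&` V) by apply: (I_meetl PA).
by case: (phi_P4 PA h1 h2).
Qed.

Lemma prA g h U V W : I g U -> I h V ->
  pr (mul g h) (pr g U V) W = pr g U (pr h V W).
Proof.
move=> hU hV; rewrite /pr.
set A := phi (inv g) U.
have hA : I (inv g) A by exact: (phi_I' GL PA hU).
set P := A `&` V.
have hPg : I (inv g) P by apply: (I_meetr PA).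
have hPh : I h P by apply: (I_meetl PA).
have hX : I g (phi g P) by apply: (phi_I PA).
have E1 : phi (inv (mul g h)) (phi g P) = phi (inv h) P.
  rewrite (g_invM GL) -(phi_comp PA) //; last by rewrite (phiK' GL PA) // (g_invK GL).
  - by rewrite (phiK' GL PA).
  - by rewrite (g_invK GL).
rewrite E1.
set Q := phi (inv h) P `&` W.
have hP' : I (inv h) (phi (inv h) P) by exact: (phi_I' GL PA hPh).
have hQ : I (inv h) Q by apply: (I_meetr PA).
have leQ : phi h Q <= P.
  rewrite -(phiK GL PA hPh); apply: (phi_leI PA hP'); exact: leIl.
have hhQ : I (inv g) (phi h Q) by apply: (I_le PA) leQ hPg.
rewrite -(phi_comp PA) //; congr (phi g _).
set V' := phi (inv h) V.
have hV' : I (inv h) V' by exact: (phi_I' GL PA hV).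
have le1 : phi (inv h) P <= V'.
  apply: (phi_leI PA _ (leIr _ _)); by rewrite (g_invK GL).
have -> : Q = phi (inv h) P `&` (V' `&` W) by rewrite /Q meetA (meet_l le1).
rewrite (phiI PA) //; last by apply: (I_meetr PA).
rewrite (phiK GL PA hPh) /P -meetA; congr (_ `&` _).
apply: meet_r; rewrite -(phiK GL PA hV); exact: (phi_leI PA hV' (leIl _ _)).
Qed.
End PAct2.
Section Chars.
Variables (G : Type) (mul : G -> G -> G) (inv : G -> G) (one : G).
Variables (d : Order.disp_t) (B : cbDistrLatticeType d).
Variables (I : G -> B -> Prop) (phi : G -> B -> B).
Hypothesis GL : group_laws mul inv one.
Hypothesis PA : is_partial_action mul inv one (fun _ : B => True) I phi.

Lemma chi0 (x : stone B) : sval x \bot = false. Proof. by case: x => ? []. Qed.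
Lemma chiU (x : stone B) U V : sval x (U `|` V) = sval x U || sval x V.
Proof. by case: x => ? [] /= _ h. Qed.
Lemma chiI (x : stone B) U V : sval x (U `&` V) = sval x U && sval x V.
Proof. by case: x => ? [] /= _ _ h. Qed.
Lemma chi_le (x : stone B) U V : U <= V -> sval x U -> sval x V.
Proof. by move=> le xU; move: (chiI x U V); rewrite (meet_l le) xU => /esym. Qed.

Lemma pr_le g U V : I g U -> pr inv phi g U V <= U.
Proof.
move=> hU; rewrite /pr -{2}(phiK GL PA hU).
exact: (phi_leI PA (phi_I' GL PA hU) (leIl _ _)).
Qed.

Lemma pr_false g U V (x : stone B) : I g U -> ~~ sval x U -> sval x (pr inv phi g U V) = false.
Proof.
move=> hU /negP nU; apply/negP => h; apply: nU; exact: chi_le (pr_le V hU) h.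
Qed.

Lemma pr_meet g U W V : I g U -> I g W ->
  pr inv phi g U V `&` W = U `&` pr inv phi g W V.
Proof.
move=> hU hW; rewrite /pr.
have hU' := phi_I' GL PA hU; have hW' := phi_I' GL PA hW.
set U' := phi (inv g) U; set W' := phi (inv g) W.
have eW : W = phi g W' by rewrite (phiK GL PA hW).
have eU : U = phi g U' by rewrite (phiK GL PA hU).
rewrite {1}eW {1}eU.
rewrite -(phiI PA) //; last exact: (I_meetr PA).
rewrite -(phiI PA) //; last exact: (I_meetr PA).
by rewrite meetAC meetA.
Qed.

Lemma pr_char g U W V (x : stone B) : I g U -> I g W -> sval x W ->
  sval x (pr inv phi g U V) = sval x U && sval x (pr inv phi g W V).
Proof.
move=> hU hW xW; rewrite -chiI -pr_meet // chiI xW andbT //.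
Qed.

Lemma ychar_ok g W (x : stone B) : I g W -> sval x W ->
  is_char (fun V => sval x (pr inv phi g W V)).
Proof.
move=> hW xW; have hW' := phi_I' GL PA hW; rewrite /pr; split.
- by rewrite meetx0 (phi0 PA) chi0.
- move=> V1 V2; rewrite meetUr (phiU PA) ?chiU //; exact: (I_meetr PA).
- move=> V1 V2; rewrite -{1}(meetxx (phi (inv g) W)) meetACA (phiI PA) ?chiI //; exact: (I_meetr PA).
- by exists (phi (inv g) W); rewrite meetxx (phiK GL PA hW).
Qed.

Definition ystone g W (x : stone B) (hW : I g W) (xW : sval x W) : stone B :=
  exist _ (fun V => sval x (pr inv phi g W V)) (ychar_ok hW xW).

Local Open Scope ring_scope.
Variable R : comPzRingType.

Definition Fm (b : skel R G) (k : G) (x : stone B) (g : G) : R :=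
  match excluded_middle_informative (exists W, I g W /\ sval x W) with
  | left H => let s := constructive_indefinite_description _ H in
      b (mul (inv g) k) (ystone (proj1 (proj2_sig s)) (proj2 (proj2_sig s)))
  | right _ => 0
  end.

Lemma inner (t : R * B * G) (m : seq (R * B * G)) k (x : stone B) : I t.2 t.1.2 ->
  \sum_(s <- m) (if excluded_middle_informative (mul t.2 s.2 = k)
                 then (t.1.1 * s.1.1) * (sval x (pr inv phi t.2 t.1.2 s.1.2))%:R else 0)
  = t.1.1 * (sval x t.1.2)%:R * Fm (fsum m) k x t.2.
Proof.
case: t => [[r U] g] /= hU.
case xU: (sval x U).
- rewrite /Fm; case: excluded_middle_informative => [H|H]; last first.
    by exfalso; apply: H; exists U.
  case: (constructive_indefinite_description _ H) => W [hW xW] /=.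
  rewrite /fsum mulr1 big_distrr /=; apply: eq_bigr => s _.
  case: excluded_middle_informative => e1; case: excluded_middle_informative => e2.
  + by rewrite (pr_char s.1.2 hU hW xW) xU /= mulrA.
  + by exfalso; apply: e2; apply/(g_eqM GL).
  + by exfalso; apply: e1; apply/(g_eqM GL).
  + by rewrite mulr0.
- rewrite mulr0 mul0r big1 // => s _.
  by case: excluded_middle_informative => [e|e] //=; rewrite (pr_false s.1.2 hU) ?xU // mulr0.
Qed.

Lemma fsum_lmul (l m : seq (R * B * G)) k (x : stone B) : valid I l ->
  fsum (lmul mul inv phi l m) k x =
  \sum_(t <- l) t.1.1 * (sval x t.1.2)%:R * Fm (fsum m) k x t.2.
Proof.
rewrite /fsum /lmul big_allpairs_dep /=.
elim: l => [|t l IH] hv; first by rewrite !big_nil.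
rewrite !big_cons IH; last by move=> u hu; apply: hv; right.
congr (_ + _); rewrite -inner; last by apply: hv; left.
done.
Qed.
End Chars.
Section Z0.
Local Open Scope ring_scope.
Variables (G : Type) (R : comPzRingType).

Lemma Z0 (T : Type) (l : seq T) (key : T -> G) (c : T -> R) :
  (forall g, \sum_(t <- l) (if excluded_middle_informative (key t = g) then c t else 0) = 0) ->
  forall F : G -> R, \sum_(t <- l) F (key t) * c t = 0.
Proof.
move=> H F; move: {2}(size l) (leqnn (size l)) => n.
elim: n l H => [|n IH] [|t l0] H Hs //; try by rewrite big_nil.
set g := key t.
pose p u := if excluded_middle_informative (key u = g) then false else true.
have sp : forall u, F (key u) * c u =
   (if excluded_middle_informative (key u = g) then F g * c u else 0) +
   (if p u then F (key u) * c u else 0).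
  by move=> u; rewrite /p; case: excluded_middle_informative => [e|e] /=; rewrite ?e ?addr0 ?add0r.
rewrite (eq_bigr _ (fun u _ => sp u)) big_split /=.
have -> : \sum_(u <- t :: l0) (if excluded_middle_informative (key u = g) then F g * c u else 0)
   = F g * \sum_(u <- t :: l0) (if excluded_middle_informative (key u = g) then c u else 0).
  rewrite big_distrr; apply: eq_bigr => u _; by case: excluded_middle_informative => _ /=; rewrite ?mulr0.
rewrite H mulr0 add0r -big_mkcond -big_filter; apply: IH.
  move=> g'; rewrite big_filter big_mkcond /=.
  case: (excluded_middle_informative (g' = g)) => [->|ng].
    apply: big1 => u _; rewrite /p; case: excluded_middle_informative => [e|ne] //=.
  apply: etrans (H g'); apply: eq_bigr => u _; rewrite /p.
  case: excluded_middle_informative => [e|ne] //=.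
  case: (excluded_middle_informative (key u = g')) => [e'|_] //=.
  by exfalso; apply: ng; rewrite -e' e.
rewrite /= /p; case: excluded_middle_informative => //= _.
by rewrite size_filter; apply: leq_trans (count_size _ _) _; exact: Hs.
Qed.
End Z0.
Section Alg.
Local Open Scope ring_scope.
Variables (G : Type) (mul : G -> G -> G) (inv : G -> G) (one : G).
Variables (d : Order.disp_t) (B : cbDistrLatticeType d).
Variables (I : G -> B -> Prop) (phi : G -> B -> B).
Hypothesis GL : group_laws mul inv one.
Hypothesis PA : is_partial_action mul inv one (fun _ : B => True) I phi.
Variable R : comPzRingType.
Notation lst := (seq (R * B * G)).
Notation lmul := (lmul mul inv phi).
Notation amul := (amul mul inv I phi).
Notation az := (@azero d B R G).

Lemma funext2 (a b : @skel d B R G) : (forall k x, a k x = b k x) -> a = b.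
Proof. by move=> h; apply: functional_extensionality => k; apply: functional_extensionality => x. Qed.

Lemma eq_big_In (T : Type) (l : seq T) (F1 F2 : T -> R) :
  (forall t, List.In t l -> F1 t = F2 t) -> \sum_(t <- l) F1 t = \sum_(t <- l) F2 t.
Proof.
elim: l => [|t l IH] h; first by rewrite !big_nil.
by rewrite !big_cons h ?IH //; [move=> u hu; apply: h; right | left].
Qed.

Lemma fsum_wd (l l' m m' : lst) : valid I l -> valid I l' -> fsum l = fsum l' -> fsum m = fsum m' ->
  fsum (lmul l m) = fsum (lmul l' m').
Proof.
move=> vl vl' el em; apply: funext2 => k x.
rewrite (fsum_lmul GL PA) // (fsum_lmul GL PA) // em.
apply/eqP; rewrite -subr_eq0; apply/eqP.
pose neg (t : R * B * G) := (- t.1.1, t.1.2, t.2).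
have HZ : forall g, \sum_(t <- l ++ map neg l')
   (if excluded_middle_informative (t.2 = g) then t.1.1 * (sval x t.1.2)%:R else 0) = 0.
  move=> g; rewrite big_cat big_map /=.
  have := congr1 (fun f => f g x) el; rewrite /fsum => ->.
  rewrite -big_split /=; apply: big1 => t _.
  by case: excluded_middle_informative => _ /=; rewrite ?mulNr ?subrr ?addr0.
have := Z0 HZ (Fm GL PA (fsum m') k x).
rewrite big_cat big_map /= => H0; rewrite -[RHS]H0.
congr (_ + _); first by apply: eq_bigr => t _; rewrite mulrC.
rewrite -sumrN; apply: eq_bigr => t _; by rewrite mulNr mulrN mulrC.
Qed.

Lemma lmul_cons t (l m : lst) : lmul (t :: l) m =
  map (fun s => (t.1.1 * s.1.1, phi t.2 (Order.meet (phi (inv t.2) t.1.2) s.1.2), mul t.2 s.2)) m ++ lmul l m.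
Proof. by []. Qed.

Lemma lmul_catl (l1 l2 m : lst) : lmul (l1 ++ l2) m = lmul l1 m ++ lmul l2 m.
Proof. by elim: l1 => [|t l1 IH] //=; rewrite !lmul_cons IH catA. Qed.

Lemma valid_cat (l m : lst) : valid I l -> valid I m -> valid I (l ++ m).
Proof. by move=> vl vm t ht; case: (List.in_app_or _ _ _ ht) => h; [apply: vl | apply: vm]. Qed.

Lemma valid_lmul (l m : lst) : valid I l -> valid I m -> valid I (lmul l m).
Proof.
elim: l => [|t l IH] vl vm; first by move=> u [].
rewrite lmul_cons; apply: valid_cat; last by apply: IH => // u hu; apply: vl; right.
move=> u hu; case: (proj1 (List.in_map_iff _ _ _) hu) => s [<- hs] /=.
apply: (pr_I GL PA); [apply: vl; left | apply: vm] => //.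
Qed.

Lemma fsum_cat (l m : lst) : fsum (l ++ m) = aadd (fsum l) (fsum m).
Proof. by apply: funext2 => k x; rewrite /fsum /aadd big_cat. Qed.

Lemma fsum_nil : fsum ([::] : lst) = az.
Proof. by apply: funext2 => k x; rewrite /fsum big_nil. Qed.

Lemma fsum_lmul_catr (l m1 m2 : lst) :
  fsum (lmul l (m1 ++ m2)) = aadd (fsum (lmul l m1)) (fsum (lmul l m2)).
Proof.
apply: funext2 => k x; rewrite /fsum /aadd /lmul !big_allpairs_dep -big_split /=.
by apply: eq_bigr => t _; rewrite big_cat.
Qed.

Lemma lmul_nilr (l : lst) : lmul l [::] = [::].
Proof. by elim: l. Qed.

Lemma fsum_assoc (l m n : lst) : valid I l -> valid I m ->
  fsum (lmul (lmul l m) n) = fsum (lmul l (lmul m n)).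
Proof.
move=> vl vm; apply: funext2 => k x; rewrite /fsum /lmul !big_allpairs_dep /=.
apply: eq_big_In => t ht; rewrite big_allpairs_dep /=.
apply: eq_big_In => s hs; apply: eq_bigr => w _.
have := prA GL PA w.1.2 (vl _ ht) (vm _ hs); rewrite /pr => ->.
by rewrite (g_mulA GL) mulrA.
Qed.

Lemma rep_spec (a : skel R G) : inA I a -> valid I (rep I a) /\ fsum (rep I a) = a.
Proof.
case=> l vl el; rewrite /rep.
exact: (epsilon_spec (inhabits ([::] : lst)) (fun l0 : lst => valid I l0 /\ fsum l0 = a) (ex_intro _ l (conj vl el))).
Qed.

Lemma amulE (a b : skel R G) (l m : lst) : valid I l -> valid I m -> fsum l = a -> fsum m = b ->
  amul a b = fsum (lmul l m).
Proof.
move=> vl vm el em.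
have [v1 e1] : valid I (rep I a) /\ fsum (rep I a) = a by apply: rep_spec; exists l.
have [v2 e2] : valid I (rep I b) /\ fsum (rep I b) = b by apply: rep_spec; exists m.
rewrite /Defs.amul; apply: fsum_wd => //; congruence.
Qed.

Lemma amul_fsum (l m : lst) : valid I l -> valid I m -> amul (fsum l) (fsum m) = fsum (lmul l m).
Proof. by move=> vl vm; apply: amulE. Qed.

Lemma inA_amul (a b : @skel d B R G) : inA I a -> inA I b -> inA I (amul a b).
Proof.
case=> l vl <- [m vm <-]; exists (lmul l m); first exact: valid_lmul.
by rewrite (amul_fsum vl vm).
Qed.

Lemma inA_aadd (a b : @skel d B R G) : inA I a -> inA I b -> inA I (aadd a b).
Proof. case=> l vl <- [m vm <-]; exists (l ++ m); [exact: valid_cat | exact: fsum_cat]. Qed.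

Lemma inA_azero : inA I (az).
Proof. by exists [::]; [move=> t [] | exact: fsum_nil]. Qed.

Lemma inA_delta U g : I g U -> inA I (delta R U g).
Proof. by move=> h; exists [:: (1, U, g)] => // t [<-|[]]. Qed.

Lemma amul_addl (a b c : @skel d B R G) : inA I a -> inA I b -> inA I c ->
  amul (aadd a b) c = aadd (amul a c) (amul b c).
Proof.
case=> l vl <- [m vm <-] [n vn <-].
rewrite -fsum_cat (amul_fsum (valid_cat vl vm) vn) (amul_fsum vl vn) (amul_fsum vm vn).
by rewrite lmul_catl fsum_cat.
Qed.

Lemma amul_addr (a b c : @skel d B R G) : inA I a -> inA I b -> inA I c ->
  amul a (aadd b c) = aadd (amul a b) (amul a c).
Proof.
case=> l vl <- [m vm <-] [n vn <-].
rewrite -fsum_cat (amul_fsum vl (valid_cat vm vn)) (amul_fsum vl vm) (amul_fsum vl vn).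
exact: fsum_lmul_catr.
Qed.

Lemma amulA (a b c : @skel d B R G) : inA I a -> inA I b -> inA I c ->
  amul (amul a b) c = amul a (amul b c).
Proof.
case=> l vl <- [m vm <-] [n vn <-].
rewrite (amul_fsum vl vm) (amul_fsum vm vn).
rewrite (amul_fsum (valid_lmul vl vm) vn) (amul_fsum vl (valid_lmul vm vn)).
exact: fsum_assoc.
Qed.

Lemma amul0l (c : @skel d B R G) : inA I c -> amul (az) c = az.
Proof.
case=> n vn <-; rewrite -fsum_nil (amul_fsum (l := [::]) _ vn) //; by move=> t [].
Qed.

Lemma amul0r (a : @skel d B R G) : inA I a -> amul a (az) = az.
Proof.
case=> l vl <-; rewrite -fsum_nil (amul_fsum (m := [::]) vl) ?lmul_nilr //; by move=> t [].
Qed.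
End Alg.
Section Dec.
Local Open Scope ring_scope.
Variables (G : Type) (d : Order.disp_t) (B : cbDistrLatticeType d) (phi : G -> B -> B).
Variable R : comPzRingType.

Fixpoint dec (U : B) (cl : seq (G * B)) : seq (G * B * B) :=
  match cl with
  | [::] => [::]
  | p :: r => (p.1, p.2, (U `&` phi p.1 p.2)%O) :: dec (U `\` phi p.1 p.2)%O r
  end.

Lemma dec_In (cl : seq (G * B)) U e : List.In e (dec U cl) ->
  List.In (e.1.1, e.1.2) cl /\ (e.2 <= U)%O /\ (e.2 <= phi e.1.1 e.1.2)%O.
Proof.
elim: cl U => [|p r IH] U //= [<-|h].
  by rewrite /= leIl leIr; split => //; left; case: p.
case: (IH _ h) => h1 [h2 h3]; split; first by right.
by split => //; apply: le_trans h2 (leBx _ _).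
Qed.

Lemma dec_sum (cl : seq (G * B)) U (x : stone B) :
  (U <= \join_(p <- cl) phi p.1 p.2)%O ->
  \sum_(e <- dec U cl) ((sval x e.2)%:R : R) = (sval x U)%:R.
Proof.
elim: cl U => [|p r IH] U /=.
  by rewrite big_nil lex0 => /eqP ->; rewrite big_nil chi0.
rewrite big_cons => hU; rewrite big_cons /= IH; last by rewrite leBLR.
have e1 : sval x U = sval x (U `&` phi p.1 p.2)%O || sval x (U `\` phi p.1 p.2)%O.
  by rewrite -chiU joinIB.
have e2 : sval x (U `&` phi p.1 p.2)%O && sval x (U `\` phi p.1 p.2)%O = false.
  by rewrite -chiI meetIB chi0.
rewrite e1; move: e2; case: (sval x _); case: (sval x _) => //= _; by rewrite ?addr0 ?add0r.
Qed.
End Dec.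

Lemma In_nth (T : Type) (s : seq T) x0 i : (i < size s)%N -> List.In (nth x0 s i) s.
Proof. elim: s i => [|a s IH] [|i] //= h; [left | right; apply: IH] => //. Qed.

Lemma In_iota m n i : (m <= i < m + n)%N -> List.In i (iota m n).
Proof.
elim: n m => [|n IH] m /=; first by rewrite addn0 => /andP [a b]; move: (leq_trans b a); rewrite ltnn.
case/andP; rewrite leq_eqVlt => /orP [/eqP ->|lt] h; [left | right] => //.
by apply: IH; rewrite lt addSnnS.
Qed.

Section Asum.
Local Open Scope ring_scope.
Variables (G : Type) (mul : G -> G -> G) (inv : G -> G) (one : G).
Variables (d : Order.disp_t) (B : cbDistrLatticeType d).
Variables (I : G -> B -> Prop) (phi : G -> B -> B).
Hypothesis GL : group_laws mul inv one.
Hypothesis PA : is_partial_action mul inv one (fun _ : B => True) I phi.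
Variable R : comPzRingType.
Notation sk := (@skel d B R G).
Notation amul := (amul mul inv I phi).
Notation az := (@azero d B R G).

Definition asum (J : Type) (s : seq J) (f : J -> sk) : sk := fun k x => \sum_(i <- s) f i k x.

Lemma asum_cons (J : Type) i (s : seq J) f : asum (i :: s) f = aadd (f i) (asum s f).
Proof. by apply: funext2 => k x; rewrite /asum big_cons. Qed.
Lemma asum_nil (J : Type) f : asum ([::] : seq J) f = az.
Proof. by apply: funext2 => k x; rewrite /asum big_nil. Qed.

Lemma eq_asum (J : Type) (s : seq J) f1 f2 : (forall i, List.In i s -> f1 i = f2 i) -> asum s f1 = asum s f2.
Proof.
move=> h; apply: funext2 => k x; rewrite /asum; apply: eq_big_In => i hi; by rewrite h.
Qed.

Lemma asum_add (J : Type) (s : seq J) f1 f2 : asum s (fun i => aadd (f1 i) (f2 i)) = aadd (asum s f1) (asum s f2).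
Proof. by apply: funext2 => k x; rewrite /asum /aadd big_split. Qed.

Lemma inA_asum (J : Type) (s : seq J) f : (forall i, List.In i s -> inA I (f i)) -> inA I (asum s f).
Proof.
elim: s => [|i s IH] h; first by rewrite asum_nil; apply: inA_azero.
rewrite asum_cons; apply: inA_aadd; [apply: h; left | apply: IH => j hj; apply: h; right] => //.
Qed.

Lemma amul_asumr (J : Type) (s : seq J) f a : inA I a -> (forall i, List.In i s -> inA I (f i)) ->
  amul a (asum s f) = asum s (fun i => amul a (f i)).
Proof.
move=> ha; elim: s => [|i s IH] h; first by rewrite !asum_nil (amul0r GL PA).
have hs : forall j, List.In j s -> inA I (f j) by move=> j hj; apply: h; right.
rewrite !asum_cons (amul_addr GL PA) ?IH //; [by apply: h; left | exact: inA_asum].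
Qed.

Lemma lideal_asum (J : Type) (s : seq J) f U : I one U ->
  (forall i, List.In i s -> lideal mul inv one I phi U (f i)) ->
  lideal mul inv one I phi U (asum s f).
Proof.
move=> hU; elim: s => [|i s IH] h.
  exists az; first exact: inA_azero.
  by rewrite asum_nil (amul0l GL PA) //; apply: inA_delta.
have [a ha ea] := h i (or_introl erefl).
have [b hb eb] : lideal mul inv one I phi U (asum s f) by apply: IH => j hj; apply: h; right.
rewrite asum_cons ea eb; exists (aadd a b); first exact: inA_aadd.
by rewrite (amul_addl GL PA) //; apply: inA_delta.
Qed.
End Asum.
Section Chain.
Local Open Scope ring_scope.
Variables (G : Type) (mul : G -> G -> G) (inv : G -> G) (one : G).
Variables (d : Order.disp_t) (B : cbDistrLatticeType d).
Variables (I : G -> B -> Prop) (phi : G -> B -> B).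
Hypothesis GL : group_laws mul inv one.
Hypothesis PA : is_partial_action mul inv one (fun _ : B => True) I phi.
Variable R : comPzRingType.
Notation amul := (amul mul inv I phi).

Lemma valid1 (r : R) (U : B) g : I g U -> valid I [:: (r, U, g)].
Proof. by move=> h t [<-|[]]. Qed.

Lemma chainE g V D U : I (inv g) V -> (D <= phi g V)%O -> (D <= U)%O ->
  amul (delta R D g) (amul (delta R V one) (amul (delta R V (inv g)) (delta R U one)))
  = delta R D one.
Proof.
move=> hV le1 le2.
have hW : I g (phi g V) by apply: (phi_I PA).
have hD : I g D by apply: (I_le PA) le1 hW.
rewrite /delta.
rewrite (amul_fsum GL PA (valid1 hV) (valid1 (I_one PA U))).
rewrite (amul_fsum GL PA (valid1 (I_one PA V))); last first.
  exact: (valid_lmul GL PA (valid1 hV) (valid1 (I_one PA U))).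
rewrite (amul_fsum GL PA (valid1 hD)); last first.
  apply: (valid_lmul GL PA); first exact: (valid1 (I_one PA V)).
  exact: (valid_lmul GL PA (valid1 hV) (valid1 (I_one PA U))).
rewrite /Defs.lmul /=.
rewrite !mulr1 (g_mulx1 GL) (g_mul1 GL) (g_mulxV GL).
rewrite (g_inv1 GL) !(phi1 PA) (g_invK GL).
congr (fsum [:: (_, _, _)]).
set D' := phi (inv g) D.
have l1 : (D' <= V)%O.
  rewrite -(phiK' GL PA hV); apply: (phi_leI PA); last exact: le1.
  by rewrite (g_invK GL).
have l2 : (D' <= phi (inv g) (phi g V `&` U))%O.
  apply: (phi_leI PA); last by rewrite lexI le1 le2.
  by rewrite (g_invK GL); apply: (I_meetr PA).
by rewrite (meet_l (x := D')) ?lexI ?l1 ?l2 // /D' (phiK GL PA hD).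
Qed.
End Chain.
Lemma In_iota_inv m n i : List.In i (iota m n) -> (m <= i < m + n)%N.
Proof.
elim: n m => [|n IH] m //= [->|h]; first by rewrite leqnn addnS ltnS leq_addr.
by move: (IH _ h); rewrite addSnnS => /andP [a b]; rewrite b andbT ltnW.
Qed.

Lemma lideal_inA (G : Type) (mul : G -> G -> G) (inv : G -> G) (one : G)
  (d : Order.disp_t) (B : cbDistrLatticeType d) (I : G -> B -> Prop) (phi : G -> B -> B)
  (R : comPzRingType) (GL : group_laws mul inv one)
  (PA : is_partial_action mul inv one (fun _ : B => True) I phi) U (y : @skel d B R G) :
  lideal mul inv one I phi U y -> inA I y.
Proof.
case=> a ha ->; apply: (inA_amul GL PA ha); apply: inA_delta; exact: (I_one PA).
Qed.

Unset Implicit Arguments.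
Set Strict Implicit.
Theorem lemma4p9 (R : comPzRingType)
  (G : Type) (mul : G -> G -> G) (inv : G -> G) (one : G)
  (d : Order.disp_t) (B2 : cbDistrLatticeType d)
  (B1 : B2 -> Prop) (I1 : G -> B2 -> Prop) (phi1 : G -> B2 -> B2)
  (I2 : G -> B2 -> Prop) (phi2 : G -> B2 -> B2) :
  group_laws mul inv one ->
  is_partial_subaction mul inv one B1 I1 phi1 I2 phi2 ->
  is_ideal (fun _ => True) B1 ->
  (forall U : B2, exists l : seq (G * B2),
      (forall p, List.In p l -> I2 (inv p.1) p.2 /\ B1 p.2) /\
      U <= \join_(p <- l) phi2 p.1 p.2) ->
  forall U : B2, exists (J : Type) (Us : J -> B2),
    (forall i, B1 (Us i)) /\
    exists h : (J -> G -> stone B2 -> R) -> G -> stone B2 -> R,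
      surj_module_hom mul inv one I2 phi2 Us U h.
Proof.
move=> GL sub hB1 hcov U.
case: sub => _ _ PA _ _.
have [cl [hcl hle]] := hcov U.
pose T := dec phi2 U cl.
pose n := size T.
pose e0 : G * B2 * B2 := (one, \bot, \bot).
pose gi i := (nth e0 T i).1.1.
pose Vi i := (nth e0 T i).1.2.
pose Di i := (nth e0 T i).2.
have facts : forall i, (i < n)%N ->
   [/\ I2 (inv (gi i)) (Vi i), B1 (Vi i), (Di i <= phi2 (gi i) (Vi i))%O & (Di i <= U)%O].
  move=> i hi; have [hin [h1 h2]] := dec_In (In_nth e0 hi).
  by have [h3 h4] := hcl _ hin; split.
have hD : forall i, (i < n)%N -> I2 (gi i) (Di i).
  move=> i hi; have [hV _ le _] := facts i hi.
  apply: (I_le PA) le _; exact: (phi_I PA).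
have dU : inA I2 (delta R U one) by apply: inA_delta; apply: (I_one PA).
have dV : forall i, inA I2 (delta R (Vi i) one) by move=> i; apply: inA_delta; apply: (I_one PA).
have dVg : forall i, (i < n)%N -> inA I2 (delta R (Vi i) (inv (gi i))).
  by move=> i hi; apply: inA_delta; have [] := facts i hi.
have dD : forall i, (i < n)%N -> inA I2 (delta R (Di i) (gi i)).
  by move=> i hi; apply: inA_delta; apply: hD.
exists nat, Vi; split.
  move=> i; case: (ltnP i n) => hi; first by have [] := facts i hi.
  by rewrite /Vi nth_default //; case: hB1.
pose c i := amul mul inv I2 phi2 (delta R (Vi i) (inv (gi i))) (delta R U one).
have dc : forall i, (i < n)%N -> inA I2 (c i).
  by move=> i hi; apply: (inA_amul GL PA) => //; apply: dVg.
have ltI : forall i, List.In i (iota 0 n) -> (i < n)%N.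
  by move=> i /In_iota_inv.
exists (fun m => asum (iota 0 n) (fun i => amul mul inv I2 phi2 (m i) (c i))).
split.
- move=> m [hm _]; apply: (lideal_asum GL PA (I_one PA U)) => i hi.
  have hi' := ltI _ hi.
  have [a ha ea] := hm i; rewrite ea.
  exists (amul mul inv I2 phi2 (amul mul inv I2 phi2 a (delta R (Vi i) one)) (delta R (Vi i) (inv (gi i)))).
    by apply: (inA_amul GL PA); [apply: (inA_amul GL PA) | apply: dVg].
  have h1 : inA I2 (amul mul inv I2 phi2 a (delta R (Vi i) one)) by apply: (inA_amul GL PA).
  have hc := dc i hi'; have hg := dVg i hi'.
  by rewrite /c (amulA GL PA) // [RHS](amulA GL PA) // [RHS](amulA GL PA).
- move=> m m' [hm _] [hm' _]; rewrite -asum_add; apply: eq_asum => i hi.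
  have hi' := ltI _ hi.
  by rewrite (amul_addl GL PA) //; [apply: (lideal_inA GL PA (hm i)) | apply: (lideal_inA GL PA (hm' i)) | apply: dc].
- move=> a m ha [hm _]; rewrite (amul_asumr GL PA) //; last first.
    move=> i hi; apply: (inA_amul GL PA); [apply: (lideal_inA GL PA (hm i)) | apply: dc; exact: ltI].
  apply: eq_asum => i hi; rewrite (amulA GL PA) //; [apply: (lideal_inA GL PA (hm i)) | apply: dc; exact: ltI].
- move=> y [a ha ->].
  pose m i := if (i < n)%N then
      amul mul inv I2 phi2 (amul mul inv I2 phi2 a (delta R (Di i) (gi i))) (delta R (Vi i) one)
    else (@azero d B2 R G).
  exists m; first split.
  + move=> i; rewrite /m; case: ifP => hi.
      exists (amul mul inv I2 phi2 a (delta R (Di i) (gi i))) => //.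
      by apply: (inA_amul GL PA) => //; apply: dD.
    exists ((@azero d B2 R G)); first exact: inA_azero.
    by rewrite (amul0l GL PA) //.
  + exists (iota 0 n) => i hni; rewrite /m; case: ifP => // hi; exfalso; apply: hni.
    by apply: In_iota; rewrite add0n hi.
  + rewrite (eq_asum (f2 := fun i => amul mul inv I2 phi2 a (delta R (Di i) one))); last first.
      move=> i hi; have hi' := ltI _ hi; rewrite /m hi' /c.
      have [hV _ le1 le2] := facts i hi'.
      have h1 := dD i hi'; have h3 := dc i hi'.
      have h4 : inA I2 (amul mul inv I2 phi2 a (delta R (Di i) (gi i))) by apply: (inA_amul GL PA).
      have h5 : inA I2 (amul mul inv I2 phi2 (delta R (Vi i) one) (c i)) by apply: (inA_amul GL PA).
      rewrite (amulA GL PA) // (amulA GL PA) //.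
      by rewrite (chainE GL PA R hV le1 le2).
    rewrite -(amul_asumr GL PA) //; last by move=> i _; apply: inA_delta; apply: (I_one PA).
    congr (amul mul inv I2 phi2 a _).
    apply: funext2 => k x; rewrite /asum /delta /fsum.
    under eq_bigr do rewrite big_cons big_nil addr0 /=.
    rewrite big_cons big_nil addr0 /=.
    case: excluded_middle_informative => e /=; last by rewrite big1.
    rewrite mul1r -(@dec_sum _ _ _ phi2 R cl U x hle) (big_nth e0) /index_iota subn0.
    by apply: eq_bigr => i _; rewrite mul1r.
Qed.
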